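(* Let $R$ be a commutative Noetherian ring of prime characteristic $p$, let $b\in\mathbb{N}$, let $W=\bigoplus_{n\geq b}W_n$ be a $\mathbb{Z}$-graded left $R[x,f]$-module (with $W_n=0$ for $n<b$), let $g_1,\ldots,g_t\in W_b$, and let $K:=\{(r_1,\ldots,r_t)\in R^t:\sum_{i=1}^t r_ig_i=0\}$. Then there is a graded left $R[x,f]$-module $W'=\bigoplus_{n\geq b-1}W'_n=(R^t/f^{-1}(K))\oplus W_b\oplus W_{b+1}\oplus\cdots$ (so $W'_{b-1}=R^t/f^{-1}(K)$ and $W'_n=W_n$ for $n\ge b$) which contains $W$ as an $R[x,f]$-submodule and satisfies $x((r_1,\ldots,r_t)+f^{-1}(K))=\sum_{i=1}^t r_i^pg_i$ for all $(r_1,\ldots,r_t)\in R^t$. Moreover, if $W$ is $x$-torsion-free, then so is $W'$, and in that case $\mathcal{G}(W')=\mathcal{G}(W)$ and $\mathcal{I}(W')=\mathcal{I}(W)$.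
   Context: $R[x,f]$ denotes the Frobenius skew polynomial ring over $R$: as a left $R$-module it is free on $(x^i)_{i\in\mathbb{N}_0}$, with multiplication subject to $xr = r^px$; it is graded with $n$th component $Rx^n$. $f:R^t\to R^t$ is the Frobenius map $(r_1,\ldots,r_t)\mapsto(r_1^p,\ldots,r_t^p)$, and $f^{-1}(K)=\{v\in R^t: f(v)\in K\}$. For a left $R[x,f]$-module $M$: $M$ is $x$-torsion-free if $xm=0$ implies $m=0$; $\operatorname{grann}_{R[x,f]}M$ is the largest graded two-sided ideal annihilating $M$; $\mathcal{G}(M)$ is the set of graded annihilators of $R[x,f]$-submodules of $M$; when $M$ is $x$-torsion-free each such graded annihilator has the form $\mathfrak{c}R[x,f]=\bigoplus_n\mathfrak{c}x^n$ for an ideal $\mathfrak{c}$ of $R$, and $\mathcal{I}(M)$ is the set of ideals $\mathfrak{c}$ of $R$ with $\mathfrak{c}R[x,f]=\operatorname{grann}_{R[x,f]}N$ for some $R[x,f]$-submodule $N$ of $M$. *)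

(* Defs.v *)
From HB Require Import structures.
From mathcomp Require Import all_boot all_order all_algebra.
Set Implicit Arguments. Unset Strict Implicit. Unset Printing Implicit Defensive.
Import Order.TTheory GRing.Theory Num.Theory.
Local Open Scope ring_scope.

Definition is_ideal (R : comRingType) (I : R -> Prop) : Prop :=
  [/\ I 0, (forall x y, I x -> I y -> I (x + y)) & (forall r x, I x -> I (r * x))].

Definition noetherian (R : comRingType) : Prop :=
  forall I : nat -> R -> Prop,
    (forall n, is_ideal (I n)) ->
    (forall n x, I n x -> I n.+1 x) ->
    exists N, forall n, (N <= n)%N -> forall x, I n x <-> I N x.

Section Modules.
Variables (R : comRingType) (M : lmodType R).

Definition is_submod (S : M -> Prop) : Prop :=
  S 0 /\ (forall r m1 m2, S m1 -> S m2 -> S (r *: m1 + m2)).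

Definition graded_lmod (D : int -> M -> Prop) : Prop :=
  [/\ (forall n, is_submod (D n)),
      (forall m, exists (s : seq int) (c : int -> M),
          (forall n, D n (c n)) /\ m = \sum_(n <- s) c n) &
      (forall (s : seq int) (c : int -> M), uniq s ->
          (forall n, D n (c n)) -> \sum_(n <- s) c n = 0 ->
          forall n, n \in s -> c n = 0)].

(* A Z-graded left R[x,f]-module structure on M: X is the action of x,
   so x r = r^p x, and x maps degree n into degree n+1. *)
Definition graded_frob_mod (p : nat) (X : M -> M) (D : int -> M -> Prop) : Prop :=
  [/\ graded_lmod D,
      (forall m1 m2, X (m1 + m2) = X m1 + X m2),
      (forall r m, X (r *: m) = r ^+ p *: X m) &
      (forall n m, D n m -> D (n + 1) (X m))].

Definition frob_submod (X : M -> M) (N : M -> Prop) : Prop :=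
  is_submod N /\ (forall m, N m -> N (X m)).

Definition x_torsion_free (X : M -> M) : Prop := forall m, X m = 0 -> m = 0.

End Modules.

(* A graded two-sided ideal of R[x,f] is given by its homogeneous
   components a n x^n (a n an ideal of R), closed under left and right
   multiplication by homogeneous elements s x^k:
     s x^k . r x^n = s r^(p^k) x^(k+n),   r x^n . s x^k = r s^(p^n) x^(n+k). *)
Definition graded_ideal (R : comRingType) (p : nat) (a : nat -> R -> Prop) : Prop :=
  [/\ (forall n, is_ideal (a n)),
      (forall n k r s, a n r -> a (k + n)%N (s * r ^+ (p ^ k))) &
      (forall n k r s, a n r -> a (n + k)%N (r * s ^+ (p ^ n)))].

(* The graded ideal a annihilates N: r x^n . m = r *: X^n m = 0. *)
Definition annihilates (R : comRingType) (M : lmodType R) (X : M -> M)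
    (a : nat -> R -> Prop) (N : M -> Prop) : Prop :=
  forall n r, a n r -> forall m, N m -> r *: iter n X m = 0.

Definition is_grann (R : comRingType) (p : nat) (M : lmodType R) (X : M -> M)
    (a : nat -> R -> Prop) (N : M -> Prop) : Prop :=
  [/\ graded_ideal p a, annihilates X a N &
      (forall a', graded_ideal p a' -> annihilates X a' N ->
         forall n r, a' n r -> a n r)].

Definition G_set (R : comRingType) (p : nat) (M : lmodType R) (X : M -> M)
    (a : nat -> R -> Prop) : Prop :=
  exists N : M -> Prop, frob_submod X N /\ is_grann p X a N.

(* I(M): ideals c of R with c R[x,f] = grann N for some submodule N. *)
Definition I_set (R : comRingType) (p : nat) (M : lmodType R) (X : M -> M)
    (c : R -> Prop) : Prop :=
  is_ideal c /\ exists N : M -> Prop, frob_submod X N /\ is_grann p X (fun _ => c) N.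

Definition relK (R : comRingType) (M : lmodType R) (t : nat) (g : 'I_t -> M)
    (v : 'rV[R]_t) : Prop := \sum_i v 0 i *: g i = 0.

Definition frobv (R : comRingType) (p t : nat) (v : 'rV[R]_t) : 'rV[R]_t :=
  \row_i (v 0 i) ^+ p.

Definition frob_preimage (R : comRingType) (p : nat) (M : lmodType R) (t : nat)
    (g : 'I_t -> M) (v : 'rV[R]_t) : Prop := relK g (frobv p v).

(* Main.v *)
Require Import Defs.
From HB Require Import structures.
From mathcomp Require Import all_boot all_order all_algebra.
From mathcomp Require Import zify.
From mathcomp Require Import boolp.
Set Implicit Arguments. Unset Strict Implicit. Unset Printing Implicit Defensive.
Import Order.TTheory GRing.Theory Num.Theory.
Local Open Scope ring_scope.

Section Constr.
Variables (R : comRingType) (p : nat) (M : lmodType R) (t : nat) (g : 'I_t -> M).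
Hypothesis hp : p \in [pchar R].

Definition phi (v : 'rV[R]_t) : M := \sum_i (v 0 i) ^+ p *: g i.

Lemma frD (x y : R) : (x + y) ^+ p = x ^+ p + y ^+ p.
Proof. by rewrite -!(pFrobenius_autE hp) rmorphD. Qed.
Lemma frN (x : R) : (- x) ^+ p = - x ^+ p.
Proof. by rewrite -!(pFrobenius_autE hp) rmorphN. Qed.
Lemma frM (x y : R) : (x * y) ^+ p = x ^+ p * y ^+ p.
Proof. by rewrite exprMn. Qed.

Lemma phi_lin r v w : phi (r *: v + w) = r ^+ p *: phi v + phi w.
Proof.
rewrite /phi scaler_sumr -big_split /=; apply: eq_bigr => i _.
by rewrite !mxE frD frM scalerDl scalerA.
Qed.

Lemma p_gt0 : (0 < p)%N. Proof. exact: prime_gt0 (pcharf_prime hp). Qed.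

Lemma phi0 : phi 0 = 0.
Proof. by rewrite /phi big1 // => i _; rewrite mxE expr0n eqn0Ngt p_gt0 scale0r. Qed.

Lemma phiD v w : phi (v + w) = phi v + phi w.
Proof. by have := phi_lin 1 v w; rewrite expr1n !scale1r. Qed.

Lemma phiZ r v : phi (r *: v) = r ^+ p *: phi v.
Proof. by rewrite -[r *: v]addr0 phi_lin phi0 addr0. Qed.

Lemma phiN v : phi (- v) = - phi v.
Proof. by have := phiZ (-1) v; rewrite frN expr1n !scaleN1r. Qed.

Definition Sp : pred M := fun u => `[< exists v, u = phi v >].

Lemma Sp_zmod : zmod_closed Sp.
Proof.
split; first by apply/asboolP; exists 0; rewrite phi0.
move=> u w /asboolP[v ->] /asboolP[v' ->]; apply/asboolP; exists (v - v').
by rewrite phiD phiN.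
Qed.
HB.instance Definition _ := GRing.isZmodClosed.Build M Sp Sp_zmod.

Inductive Q' (h : p \in [pchar R]) := MkQ u & Sp u.
Local Notation Q := (Q' hp).
Definition qval (q : Q) : M := let: MkQ u _ := q in u.
HB.instance Definition _ := [isSub of Q for qval].
HB.instance Definition _ := [Choice of Q by <:].
HB.instance Definition _ := [SubChoice_isSubZmodule of Q by <:].

Lemma SpZ r u : Sp u -> Sp (r ^+ p *: u).
Proof. by move=> /asboolP[v ->]; apply/asboolP; exists (r *: v); rewrite phiZ. Qed.

Definition scaleQ (r : R) (q : Q) : Q := @MkQ hp _ (SpZ r (valP q)).

Lemma scaleQA a b v : scaleQ a (scaleQ b v) = scaleQ (a * b) v.
Proof. by apply: val_inj => /=; rewrite scalerA frM mulrC. Qed.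
Lemma scaleQ1 : left_id 1 scaleQ.
Proof. by move=> v; apply: val_inj => /=; rewrite expr1n scale1r. Qed.
Lemma scaleQDr : right_distributive scaleQ +%R.
Proof. by move=> a u v; apply: val_inj => /=; rewrite scalerDr. Qed.
Lemma scaleQDl v : {morph scaleQ^~ v: a b / a + b}.
Proof. by move=> a b; apply: val_inj => /=; rewrite frD scalerDl. Qed.
HB.instance Definition _ := GRing.Zmodule_isLmodule.Build R Q scaleQA scaleQ1 scaleQDr scaleQDl.

Definition Mp := (Q * M)%type.
Definition QQ := Q.

End Constr.

Lemma zero_of_double (V : zmodType) (x : V) : x = x + x -> x = 0.
Proof. by move=> H; have := congr1 (fun y => y - x) H; rewrite addrK subrr => ->. Qed.

Section Ann.
Variables (R : comRingType) (p : nat) (M : lmodType R) (X : M -> M).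
Hypothesis XD : forall m1 m2, X (m1 + m2) = X m1 + X m2.
Hypothesis XZ : forall r m, X (r *: m) = r ^+ p *: X m.

Definition Ann (N : M -> Prop) (n : nat) (r : R) : Prop :=
  forall m, N m -> r *: iter n X m = 0.

Lemma X0 : X 0 = 0.
Proof. by apply: zero_of_double; rewrite -XD addr0. Qed.

Lemma iter0 k : iter k X 0 = 0.
Proof. by elim: k => //= k ->; rewrite X0. Qed.

Lemma iterZ k r m : iter k X (r *: m) = r ^+ (p ^ k) *: iter k X m.
Proof.
elim: k => [|k IH] /=; first by rewrite expn0 expr1.
by rewrite IH XZ -exprM expnSr.
Qed.

Lemma iter_closed N : frob_submod X N -> forall k m, N m -> N (iter k X m).
Proof. by move=> [_ HX]; elim=> //= k IH m /IH /HX. Qed.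

Lemma Ann_graded N : frob_submod X N -> graded_ideal p (Ann N).
Proof.
move=> FN; have [[N0 NS] NX] := FN; split.
- move=> n; split.
  + by move=> m _; rewrite scale0r.
  + by move=> x y Hx Hy m Nm; rewrite scalerDl Hx // Hy // addr0.
  + by move=> r x Hx m Nm; rewrite -scalerA Hx // scaler0.
- move=> n k r s Hr m Nm; rewrite iterD -scalerA -iterZ.
  by rewrite Hr // iter0 scaler0.
- move=> n k r s Hr m Nm; rewrite iterD -scalerA -iterZ Hr //.
  rewrite -[_ *: _]addr0; apply: NS => //; exact: iter_closed.
Qed.

Lemma graded_ideal_ext (a b : nat -> R -> Prop) :
  (forall n r, a n r <-> b n r) -> graded_ideal p b -> graded_ideal p a.
Proof.
move=> E [HI H1 H2]; split.
- move=> n; have [I0 ID IM] := HI n; split.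
  + by apply/E.
  + by move=> x y /E Hx /E Hy; apply/E; apply: ID.
  + by move=> r x /E Hx; apply/E; apply: IM.
- by move=> n k r s /E Hr; apply/E; apply: H1.
- by move=> n k r s /E Hr; apply/E; apply: H2.
Qed.

Lemma grann_iff a N : frob_submod X N ->
  is_grann p X a N <-> (forall n r, a n r <-> Ann N n r).
Proof.
move=> FN; split.
- move=> [Ga Aa Ma] n r; split; first by move=> H m Nm; apply: Aa.
  move=> H; apply: (Ma (Ann N)) H; first exact: Ann_graded.
  by move=> n' r' H' m Nm; apply: H'.
- move=> E; split.
  + by apply: (graded_ideal_ext E); apply: Ann_graded.
  + by move=> n r /E H m Nm; apply: H.
  + by move=> a' Ga' Aa' n r H; apply/E => m Nm; apply: Aa'.
Qed.
End Ann.

Section Transfer.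
Variables (R : comRingType) (p : nat) (M M' : lmodType R) (X : M -> M) (X' : M' -> M')
  (iota : M -> M').
Hypothesis p_gt0 : (0 < p)%N.
Hypothesis XD : forall m1 m2, X (m1 + m2) = X m1 + X m2.
Hypothesis XZ : forall r m, X (r *: m) = r ^+ p *: X m.
Hypothesis X'D : forall m1 m2, X' (m1 + m2) = X' m1 + X' m2.
Hypothesis X'Z : forall r m, X' (r *: m) = r ^+ p *: X' m.
Hypothesis iota_lin : forall r m1 m2, iota (r *: m1 + m2) = r *: iota m1 + iota m2.
Hypothesis iota_inj : injective iota.
Hypothesis iotaX : forall m, iota (X m) = X' (iota m).
Hypothesis X'im : forall m', exists m, X' m' = iota m.
Hypothesis tf' : x_torsion_free X'.

Lemma iota0 : iota 0 = 0.
Proof. by apply: zero_of_double; rewrite -{1}(addr0 0) -[X in X + 0](scale1r 0) iota_lin scale1r. Qed.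

Lemma iotaZ r m : iota (r *: m) = r *: iota m.
Proof. by rewrite -[r *: m]addr0 iota_lin iota0 addr0. Qed.

Lemma iotaD m1 m2 : iota (m1 + m2) = iota m1 + iota m2.
Proof. by have := iota_lin 1 m1 m2; rewrite !scale1r. Qed.

Lemma iota_iter n m : iota (iter n X m) = iter n X' (iota m).
Proof. by elim: n => //= n IH; rewrite iotaX IH. Qed.

Lemma G_transfer (a : nat -> R -> Prop) :
  (exists N, frob_submod X N /\ forall n r, a n r <-> Ann X N n r) <->
  (exists N', frob_submod X' N' /\ forall n r, a n r <-> Ann X' N' n r).
Proof.
split.
- move=> [N [[[N0 NS] NX] E]].
  exists (fun m' => exists m, N m /\ m' = iota m); split.
  + split; first split.
    * by exists 0; rewrite iota0.
    * move=> r _ _ [m1 [N1 ->]] [m2 [N2 ->]]; exists (r *: m1 + m2).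
      by rewrite iota_lin; split=> //; apply: NS.
    * by move=> _ [m [Nm ->]]; exists (X m); rewrite iotaX; split=> //; apply: NX.
  + move=> n r; split.
    * by move=> /E H _ [m [Nm ->]]; rewrite -iota_iter -iotaZ H // iota0.
    * move=> H; apply/E => m Nm; apply: iota_inj; rewrite iotaZ iota_iter iota0; apply: H.
      by exists m.
- move=> [N' [[[N0 NS] NX] E]].
  exists (fun m => N' (iota m)); split.
  + split; first split.
    * by rewrite iota0.
    * by move=> r m1 m2 H1 H2; rewrite iota_lin; apply: NS.
    * by move=> m H; rewrite iotaX; apply: NX.
  + move=> n r; split.
    * move=> /E H m Nm; apply: iota_inj; rewrite iotaZ iota_iter iota0; exact: H.
    * move=> H; apply/E => m' Nm'; apply: tf'; have [m0 Hm0] := X'im m'.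
      rewrite X'Z -iterS iterSr Hm0.
      rewrite -iota_iter -(prednK p_gt0) exprSr -scalerA -iotaZ H ?iota0 ?scaler0 //.
      by rewrite -Hm0; apply: NX.
Qed.
End Transfer.

Lemma submod_sum (R : comRingType) (M : lmodType R) (S : M -> Prop) (I : Type)
  (r : seq I) (P : pred I) (F : I -> M) :
  is_submod S -> (forall i, P i -> S (F i)) -> S (\sum_(i <- r | P i) F i).
Proof.
move=> [S0 SS] HF; elim/big_ind: _ => //.
by move=> x y Hx Hy; rewrite -[x]scale1r; apply: SS.
Qed.

Lemma submodD (R : comRingType) (M : lmodType R) (S : M -> Prop) x y :
  is_submod S -> S x -> S y -> S (x + y).
Proof. by move=> [_ SS] Hx Hy; rewrite -[x]scale1r; apply: SS. Qed.

Lemma fst_sum (V1 V2 : zmodType) (I : Type) (r : seq I) (P : pred I) (F : I -> V1 * V2) :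
  (\sum_(i <- r | P i) F i).1 = \sum_(i <- r | P i) (F i).1.
Proof. by apply: (big_morph fst) => //. Qed.
Lemma snd_sum (V1 V2 : zmodType) (I : Type) (r : seq I) (P : pred I) (F : I -> V1 * V2) :
  (\sum_(i <- r | P i) F i).2 = \sum_(i <- r | P i) (F i).2.
Proof. by apply: (big_morph snd) => //. Qed.

Lemma uniq_decomp (R : comRingType) (M : lmodType R) (D : int -> M -> Prop) :
  (forall n, is_submod (D n)) ->
  forall (s : seq int) (c : int -> M), (forall n, D n (c n)) ->
  exists (s0 : seq int) (c0 : int -> M),
    [/\ uniq s0, (forall n, D n (c0 n)) & \sum_(n <- s) c n = \sum_(n <- s0) c0 n].
Proof.
move=> Dsub; elim=> [|a s IH] c Hc.
  by exists [::], c; rewrite !big_nil.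
have [s0 [c0 [U0 H0 E0]]] := IH c Hc.
rewrite big_cons E0.
case: (boolP (a \in s0)) => Ha.
- exists s0, (fun n => if n == a then c a + c0 a else c0 n); split=> //.
  + by move=> n; case: eqP => [->|_] //; apply: submodD.
  + rewrite [RHS](bigD1_seq a) //= eqxx (bigD1_seq a _ U0) //= -addrA; congr (_ + (_ + _)).
    by apply: eq_bigr => n /negPf ->.
- exists (a :: s0), (fun n => if n == a then c a else c0 n); split.
  + by rewrite /= Ha.
  + by move=> n; case: eqP => [->|_].
  + rewrite big_cons eqxx; congr (_ + _); apply: eq_big_seq => n Hn.
    by case: eqP Hn Ha => // -> ->.
Qed.

Section Concrete.
Variables (R : comRingType) (p : nat) (M : lmodType R) (t : nat) (g : 'I_t -> M).
Hypothesis hp : p \in [pchar R].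
Variables (X : M -> M) (D : int -> M -> Prop) (b : nat).

Definition Mpl : lmodType R := Mp g hp.
Definition Xp (x : Mpl) : Mpl := (0, qval x.1 + X x.2).
Definition Dp (n : int) (x : Mpl) : Prop :=
  if n == b%:Z - 1 then x.2 = 0 else (x.1 = 0 /\ D n x.2).
Definition iotap (m : M) : Mpl := (0, m).
Lemma phiS v : Sp p g (phi p g v). Proof. by apply/asboolP; exists v. Qed.
Definition psip (v : 'rV[R]_t) : Mpl := (@MkQ _ _ _ _ _ hp _ (phiS v), 0).

Hypothesis HG : graded_frob_mod p X D.
Hypothesis Hlow : forall n : int, n < b%:Z -> forall m, D n m -> m = 0.
Hypothesis Hg : forall i, D b%:Z (g i).

Lemma XD m1 m2 : X (m1 + m2) = X m1 + X m2. Proof. by case: HG. Qed.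
Lemma XZ r m : X (r *: m) = r ^+ p *: X m. Proof. by case: HG. Qed.
Lemma Dsub n : is_submod (D n). Proof. by case: HG => [[]]. Qed.
Lemma XDeg n m : D n m -> D (n + 1) (X m). Proof. by case: HG => _ _ _; apply. Qed.
Lemma X0' : X 0 = 0. Proof. exact: X0 XD. Qed.

Lemma D0 n : D n 0. Proof. by case: (Dsub n). Qed.

Lemma Dq (q : QQ g hp) : D b%:Z (qval q).
Proof.
case: q => u /= /asboolP[v ->]; apply: submod_sum; first exact: Dsub.
move=> i _; rewrite -[_ *: _]addr0; case: (Dsub b) => _; apply => //; exact: D0.
Qed.

Lemma Xp_frob : graded_frob_mod p Xp Dp.
Proof.
have [Dg Ddec Duniq] : graded_lmod D by case: HG.
split.
- split.
  + move=> n; rewrite /Dp; case: eqP => _; split => //.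
    * by move=> r x y /= -> ->; rewrite scaler0 addr0.
    * by split=> //; apply: D0.
    * move=> r x y /= [-> Hx] [-> Hy]; split; first by rewrite scaler0 addr0.
      by case: (Dsub n) => _; apply.
  + move=> [q m]; have [s [c [Hc ->]]] := Ddec m.
    exists (b%:Z - 1 :: filter (fun n => n != b%:Z - 1) s).
    exists (fun n => if n == b%:Z - 1 then (q, 0) else (0, c n)); split.
      by move=> n; rewrite /Dp; case: eqP.
    rewrite big_cons eqxx big_filter; apply/eqP/andP; split=> /=.
    * rewrite fst_sum big1 ?addr0 // => n /negPf -> //.
    * rewrite snd_sum add0r [X in _ == X]big_mkcond /=; apply/eqP/eq_bigr => n _.
      case: eqP => [->|] //=; apply: Hlow (Hc _); lia.
  + move=> s c U Hc Hs0 n Hn.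
    have H2 : forall n, n \in s -> (c n).2 = 0.
      apply: (Duniq s (fun n => (c n).2)) => //.
      * move=> k; have := Hc k; rewrite /Dp; case: eqP => [_ ->|_ []//]; exact: D0.
      * by rewrite -snd_sum Hs0.
    have H1 : forall n, n \in s -> (c n).1 = 0.
      move=> k Hk; have := Hc k; rewrite /Dp; case: eqP => [Ek _|_ []//].
      have := congr1 fst Hs0; rewrite fst_sum (bigD1_seq k) //= big1 ?addr0 -?Ek //.
      by move=> j /negPf Hj; have := Hc j; rewrite /Dp -Ek Hj => -[].
    by case E: (c n) (H1 n Hn) (H2 n Hn) => [x y] /= -> ->.
- move=> [q1 m1] [q2 m2]; rewrite /Xp /= XD; congr (_, _); first by rewrite addr0.
  idtac.
  by rewrite /= addrACA.
- move=> r [q m]; rewrite /Xp /= XZ; congr (_, _); first by rewrite /= scaler0.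
  by rewrite /= scalerDr.
- move=> n [q m]; rewrite /Dp /Xp /=.
  case: eqP => [En ->|Hn [-> Hm]].
  + have -> : (n + 1 == b%:Z - 1) = false by apply/negbTE; lia.
    split=> //; rewrite X0' addr0 (_ : n + 1 = b%:Z); first exact: Dq.
    lia.
  + case: eqP => [En|_].
    * by rewrite (Hlow _ Hm) ?X0' ?addr0 //; lia.
    * by split=> //; rewrite add0r; apply: XDeg.
Qed.

Lemma iotap_lin r m1 m2 : iotap (r *: m1 + m2) = r *: iotap m1 + iotap m2.
Proof. by rewrite /iotap; congr (_, _); rewrite /= scaler0 addr0. Qed.
Lemma iotap_inj : injective iotap. Proof. by move=> x y []. Qed.
Lemma iotapX m : iotap (X m) = Xp (iotap m).
Proof. by rewrite /iotap /Xp /= add0r. Qed.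
Lemma iotap_D n m : D n m -> Dp n (iotap m).
Proof. rewrite /Dp /=; case: eqP => [En Hm|//]; apply: Hlow Hm; lia. Qed.
Lemma iotap_surj (n : int) : b%:Z <= n -> forall m', Dp n m' -> exists m, D n m /\ m' = iotap m.
Proof.
move=> Hn [q m]; rewrite /Dp; case: eqP => [En|_ [/= -> Hm]]; first lia.
by exists m.
Qed.
Lemma psip_lin r v1 v2 : psip (r *: v1 + v2) = r *: psip v1 + psip v2.
Proof.
rewrite /psip; congr (_, _); last by rewrite /= scaler0 addr0.
by apply: val_inj => /=; rewrite phi_lin.
Qed.
Lemma psip_D v : Dp (b%:Z - 1) (psip v). Proof. by rewrite /Dp eqxx. Qed.
Lemma psip_surj m' : Dp (b%:Z - 1) m' -> exists v, psip v = m'.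
Proof.
case: m' => [[u Hu] m]; rewrite /Dp eqxx /= => ->.
have /asboolP[v Ev] := Hu; exists v; rewrite /psip; congr (_, _).
by apply: val_inj => /=.
Qed.
Lemma psip0 v : psip v = 0 <-> frob_preimage p g v.
Proof.
have E : phi p g v = \sum_i frobv p v 0 i *: g i.
  by apply: eq_bigr => i _; rewrite mxE.
rewrite /frob_preimage /relK -E; split.
- by move=> H; have := congr1 (fun x => qval x.1) H.
- by move=> H; rewrite /psip; congr (_, _); apply: val_inj.
Qed.
Lemma psipX v : Xp (psip v) = iotap (\sum_i (v 0 i) ^+ p *: g i).
Proof. by rewrite /Xp /iotap /= X0' addr0. Qed.

Lemma Xp_tf : x_torsion_free X -> x_torsion_free Xp.
Proof.
move=> tf [q m] H; have H2 : qval q + X m = 0 := congr1 snd H.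
have [Dg Ddec Duniq] : graded_lmod D by case: HG.
have [s0 [c0 [Hc0 Em]]] := Ddec m.
have [s [c [U Hc E]]] := @uniq_decomp _ _ D Dg s0 c0 Hc0.
rewrite Em E in H2 *.
have Xsum : X (\sum_(n <- s) c n) = \sum_(n <- s) X (c n).
  by apply: (big_morph X XD X0').
pose e := fun k : int => if k == b%:Z then qval q else X (c (k - 1)).
pose s' := b%:Z :: map (fun n => n + 1) (filter (fun n => n + 1 != b%:Z) s).
have Us' : uniq s'.
  rewrite /s' /=; apply/andP; split.
  - apply/mapP => -[n]; rewrite mem_filter => /andP[Hn _] Eb.
    by rewrite -Eb eqxx in Hn.
  - by rewrite map_inj_uniq ?filter_uniq // => x y; apply: addIr.
have He : forall k, D k (e k).
  move=> k; rewrite /e; case: eqP => [->|_]; first exact: Dq.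
  by have := XDeg (Hc (k - 1)); rewrite subrK.
have Hsum : \sum_(k <- s') e k = 0.
  rewrite big_cons /e eqxx big_map big_filter -[RHS]H2 Xsum; congr (_ + _).
  rewrite big_mkcond /=; apply: eq_bigr => n _.
  case: (n + 1 =P b%:Z) => [E1|E1] /=.
  - rewrite (Hlow _ (Hc n)) ?X0' //; lia.
  - by rewrite addrK.
have Hz := Duniq s' e Us' He Hsum.
have Hq : q = 0.
  by apply: val_inj; have := Hz b%:Z (mem_head _ _); rewrite /e eqxx.
have Hm : forall n, n \in s -> c n = 0.
  move=> n Hn; case: (n + 1 =P b%:Z) => [E1|E1]; first by apply: Hlow (Hc n); lia.
  apply: tf.
  have Hin : n + 1 \in s'.
    rewrite inE; apply/orP; right; apply/mapP; exists n => //.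
    by rewrite mem_filter Hn andbT; apply/eqP.
  by move: (Hz _ Hin); rewrite /e; case: eqP => // _; rewrite addrK.
rewrite Hq big_seq big1 // => n Hn; exact: Hm.
Qed.
End Concrete.

Lemma G_set_iff (R : comRingType) (p : nat) (M : lmodType R) (X : M -> M) a :
  (forall m1 m2, X (m1 + m2) = X m1 + X m2) ->
  (forall r m, X (r *: m) = r ^+ p *: X m) ->
  G_set p X a <-> exists N, frob_submod X N /\ forall n r, a n r <-> Ann X N n r.
Proof.
move=> XD XZ; split.
- by move=> [N [F H]]; exists N; split=> //; apply/(grann_iff XD XZ).
- by move=> [N [F H]]; exists N; split=> //; apply/(grann_iff XD XZ).
Qed.

Lemma I_set_iff (R : comRingType) (p : nat) (M : lmodType R) (X : M -> M) c :
  (forall m1 m2, X (m1 + m2) = X m1 + X m2) ->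
  (forall r m, X (r *: m) = r ^+ p *: X m) ->
  I_set p X c <-> is_ideal c /\ G_set p X (fun _ => c).
Proof. by move=> XD XZ; split=> -[H1 H2]. Qed.

Theorem lemma2p8 (R : comRingType) (p b : nat) (M : lmodType R) (X : M -> M)
    (D : int -> M -> Prop) (t : nat) (g : 'I_t -> M) :
  p \in [pchar R] -> noetherian R ->
  graded_frob_mod p X D ->
  (forall n : int, n < b%:Z -> forall m, D n m -> m = 0) ->
  (forall i, D b%:Z (g i)) ->
  exists (M' : lmodType R) (X' : M' -> M') (D' : int -> M' -> Prop)
         (iota : M -> M') (psi : 'rV[R]_t -> M'),
    [/\ graded_frob_mod p X' D',
        (forall n : int, n < b%:Z - 1 -> forall m, D' n m -> m = 0),
        [/\ (forall r m1 m2, iota (r *: m1 + m2) = r *: iota m1 + iota m2),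
            injective iota,
            (forall m, iota (X m) = X' (iota m)),
            (forall n m, D n m -> D' n (iota m)) &
            (forall n : int, b%:Z <= n -> forall m', D' n m' ->
               exists m, D n m /\ m' = iota m)],
        [/\ (forall r v1 v2, psi (r *: v1 + v2) = r *: psi v1 + psi v2),
            (forall v, D' (b%:Z - 1) (psi v)),
            (forall m', D' (b%:Z - 1) m' -> exists v, psi v = m'),
            (forall v, psi v = 0 <-> frob_preimage p g v) &
            (forall v, X' (psi v) = iota (\sum_i (v 0 i) ^+ p *: g i))] &
        (x_torsion_free X ->
           [/\ x_torsion_free X',
               (forall a, G_set p X a <-> G_set p X' a) &
               (forall c, I_set p X c <-> I_set p X' c)])].
Proof.
move=> hp _ HG Hlow Hg.
pose Xq := @Xp _ _ _ _ g hp X.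
pose io := @iotap _ _ _ _ g hp.
exists (Mpl g hp), Xq, (@Dp _ _ _ _ g hp D b), io, (@psip _ _ _ _ g hp).
have XDp := XD HG; have XZp := XZ HG.
have HGp := @Xp_frob _ _ _ _ g hp X D b HG Hlow Hg.
have [_ XpD XpZ _] := HGp.
split.
- exact: HGp.
- move=> n Hn [q m]; rewrite /Dp; case: eqP => [En|_ [/= -> Hm]]; first lia.
  by rewrite (Hlow n _ m Hm) //; lia.
- split.
  + exact: (@iotap_lin _ _ _ _ g hp).
  + exact: iotap_inj.
  + exact: iotapX.
  + exact: (@iotap_D _ _ _ _ g hp D b Hlow).
  + exact: iotap_surj.
- split.
  + exact: (@psip_lin _ _ _ _ g hp).
  + exact: psip_D.
  + exact: psip_surj.
  + exact: (@psip0 _ _ _ _ g hp).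
  + exact: (@psipX _ _ _ _ g hp X D HG).
- move=> tf; have tfp := @Xp_tf _ _ _ _ g hp X D b HG Hlow Hg tf.
  have pg0 : (0 < p)%N := prime_gt0 (pcharf_prime hp).
  have GT a := @G_transfer R p M (Mpl g hp) X Xq io pg0 XpZ
     (@iotap_lin _ _ _ _ _ hp) (@iotap_inj _ _ _ _ _ hp) (@iotapX _ _ _ _ _ hp X)
     (fun x => ex_intro _ _ erefl) tfp a.
  have GG a : G_set p X a <-> G_set p Xq a.
    rewrite (G_set_iff _ XDp XZp) (G_set_iff _ XpD XpZ); exact: GT.
  split=> // c; rewrite (I_set_iff _ XDp XZp) (I_set_iff _ XpD XpZ) GG; done.
Qed.
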